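(* For any real $n\times n$ matrix $A$ there exist an integer $m$, a purely competitive $m\times m$ real matrix $B$, and an injective linear map $T:\mathbb R^n\to\mathbb R^m$ such that $TA=BT$.
   Context: A square real matrix $B$ is competitive if $B_{ij}\le 0$ for all $i\ne j$, and purely competitive if it is competitive and additionally $B_{ii}=0$ for all $i$. *)

(* Defs.v *)
From mathcomp Require Import all_boot all_order all_algebra.
From mathcomp Require Import reals.
Set Implicit Arguments. Unset Strict Implicit. Unset Printing Implicit Defensive.
Import GRing.Theory Num.Theory.
Local Open Scope ring_scope.

Definition competitive (R : realType) (m : nat) (B : 'M[R]_m) : Prop :=
  forall i j : 'I_m, i != j -> B i j <= 0.

Definition purely_competitive (R : realType) (m : nat) (B : 'M[R]_m) : Prop :=
  competitive B /\ forall i : 'I_m, B i i = 0.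

(* Main.v *)
Require Import Defs.
From mathcomp Require Import all_boot all_order all_algebra.
From mathcomp Require Import reals.
Local Open Scope ring_scope.
Import Order.TTheory GRing.Theory Num.Theory.

Section Aux.
Variable R : realType.

Lemma block_le0 (p q : nat) (M1 : 'M[R]_(p,p)) (M2 : 'M[R]_(p,q)) (M3 : 'M[R]_(q,p)) (M4 : 'M[R]_(q,q)) :
  (forall i j, M1 i j <= 0) -> (forall i j, M2 i j <= 0) ->
  (forall i j, M3 i j <= 0) -> (forall i j, M4 i j <= 0) ->
  forall i j, block_mx M1 M2 M3 M4 i j <= 0.
Proof.
move=> h1 h2 h3 h4 i j.
rewrite -(splitK i) -(splitK j).
case: (split i) => k; case: (split j) => l /=.
- by rewrite block_mxEul.
- by rewrite block_mxEur.
- by rewrite block_mxEdl.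
- by rewrite block_mxEdr.
Qed.

Lemma block_diag0 (p q : nat) (M1 : 'M[R]_(p,p)) (M2 : 'M[R]_(p,q)) (M3 : 'M[R]_(q,p)) (M4 : 'M[R]_(q,q)) :
  (forall i, M1 i i = 0) -> (forall i, M4 i i = 0) ->
  forall i, block_mx M1 M2 M3 M4 i i = 0.
Proof.
move=> h1 h4 i.
rewrite -(splitK i).
case: (split i) => k /=.
- by rewrite block_mxEul.
- by rewrite block_mxEdr.
Qed.

End Aux.

Theorem lemma4 (R : realType) (n : nat) (A : 'M[R]_n) :
  exists (m : nat) (B : 'M[R]_m) (T : 'M[R]_(m, n)),
    purely_competitive B /\
    injective (fun v : 'cV[R]_n => T *m v) /\
    T *m A = B *m T.
Proof.
pose P := map_mx (fun a => Num.max a 0) A.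
pose N := map_mx (fun a => Num.max (- a) 0) A.
have hP : forall i j, - P i j <= 0.
  by move=> i j; rewrite mxE oppr_le0 le_max lexx orbT.
have hN : forall i j, - N i j <= 0.
  by move=> i j; rewrite mxE oppr_le0 le_max lexx orbT.
have hPN : P - N = A.
  apply/matrixP => i j; rewrite !mxE.
  case: (lerP 0 (A i j)) => h.
  - have : - A i j <= 0 by rewrite oppr_le0.
    by move/max_idPr => ->; rewrite subr0.
  - have : 0 <= - A i j by rewrite oppr_ge0 ltW.
    by move/max_idPl => ->; rewrite opprK add0r.
have h0 : forall i j, (0 : 'M[R]_n) i j <= 0 by move=> i j; rewrite mxE.
have d0 : forall i, (0 : 'M[R]_n) i i = 0 by move=> i; rewrite mxE.
exists ((n + n) + (n + n))%N.
exists (block_mx (block_mx 0 (-N) (-N) 0) (block_mx (-P) 0 (-P) 0)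
                 (block_mx (-P) 0 (-P) 0) (block_mx 0 (-N) (-N) 0)).
exists (col_mx (col_mx 1%:M 1%:M) (col_mx (- 1%:M) (- 1%:M))).
split; [split|split].
- move=> i j _.
  apply: block_le0; move=> k l; apply: block_le0 => // a b;
    first [apply: hP | apply: hN | by rewrite mxE].
- apply: block_diag0; move=> k; apply: block_diag0 => //.
- move=> u v /= huv.
  have := congr1 (fun w => usubmx (usubmx w)) huv.
  by rewrite /= !mul_col_mx !col_mxKu !mul1mx.
- rewrite -hPN !(mul_col_mx, mul_row_col, mul_block_col) !mulNmx !mul1mx !mulmxN !mulmx1
    ?mul0mx ?mulmx0 ?addr0 ?add0r ?opprK ?add_col_mx.
  by rewrite !oppr0 ?addr0 ?add0r opprB (addrC (- N)) (addrC (- P)).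
Qed.
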